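(* Let $\mathcal{G}$ be an $A$-compatible P-graph satisfying condition ( * ) below. Let $k\in\{1,\dots,d+1\}$, $\widetilde B\in\mathcal{B}^k$, $\ell\in\{1,\dots,m+1\}\setminus\widetilde B$, $B=\widetilde B\cup\{\ell\}$, and $\zeta\in\Theta_\mathcal{G}(F,B)$. Then: (i) for every $r\in\{1,\dots,d\}$ and $i\in B$, any directed path from $j_r$ to $i$ in $\zeta$ contains no edge of $\mathcal{E}^-$. (ii) If $\zeta'\in\Theta_\mathcal{G}(B)$ is such that for all $r=1,\dots,d$ the connected component of $\zeta'$ containing $j_r$ has root $g_\zeta(j_r)$, then the connected component of $\zeta'$ containing $m+1$ has root $g_\zeta(m+1)$; in particular $\zeta'\in\Theta_\mathcal{G}(F,B)$. Condition ( * ): for every $\ell'\in\{1,\dots,m\}$ and $i\in\{1,\dots,d\}$, every directed path in $\mathcal{G}$ from $j_i$ to $\ell'$ that contains an edge in $\mathcal{E}^-$ goes through $m+1$.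
   Context: $R$ is a partially ordered commutative ring. Let $d\ge0$, $m_0,\dots,m_d\ge0$ with $m=m_0+\cdots+m_d$. $A\in R^{m\times m}$, $b\in R^m$: for $i=1,\dots,d$ the rows indexed by $\mathcal{N}_i=\{1+\sum_{j<i}m_j,\dots,\sum_{j\le i}m_j\}$ are zero outside the columns indexed by $\mathcal{N}_i$, where they form a square $A_i$, and the corresponding subvector $b^i$ has at most one nonzero entry; the last $m_0$ rows form an arbitrary $A_0\in R^{m_0\times m}$ with arbitrary $b^0$. $\mathcal{N}=\{1,\dots,m+1\}$, $\mathcal{N}_0=\{m-m_0+1,\dots,m+1\}$, $\mathcal{N}_{d+1}=\{m+1\}$. Fixed $j_i\in\mathcal{N}_i$ with $b_j=0$ for all $j\le m-m_0$, $j\notin\{j_1,\dots,j_d\}$; $F=\{j_1,\dots,j_d,m+1\}$. $\mathcal{B}^k=\{\{w_j:j\in\{1,\dots,d+1\}\setminus\{k\}\}: w_j\in\mathcal{N}_j\}$. A multidigraph $\mathcal{G}=(\mathcal{N},\mathcal{E})$ has source/target maps $s,t$, no self-loops, labeling $\pi\colon\mathcal{E}\to R$, Laplacian $L_{ij}=\sum_{e:s(e)=j,t(e)=i}\pi(e)$ ($i\ne j$), $L_{ii}=-\sum_{k\ne i}L_{ki}$. $\mathcal{G}$ is $A$-compatible if (i) no edge goes from a node in $\mathcal{N}_i$ ($i\ge0$) to a node in $\mathcal{N}_j$ with $i\ne j$, $j\ge1$; (ii) for $\ell\notin F$ the $\ell$-th row of $L$ equals the $\ell$-th row of $(A\,|\,b)$.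 Trees/forests: subgraphs with acyclic underlying undirected graph (connected for trees), rooted at $N$ if $N$ is the only node without outgoing edges; spanning means node set $\mathcal{N}$; forests are identified with edge sets. $\Theta_\mathcal{G}(B)$: spanning forests with $|B|$ components, each a tree rooted at a node of $B$; $\Theta_\mathcal{G}(F,B)$ ($|F|=|B|$): those of them in which moreover each component contains a node of $F$. For $\zeta\in\Theta_\mathcal{G}(F,B)$, $g_\zeta\colon F\to B$ maps $i$ to the root of the tree of $\zeta$ containing $i$. A cycle is a closed directed path with no repeated nodes. $\mathcal{E}^-=\{e:\pi(e)\in R_{<0}\}$, $\mathcal{E}^+=\{e:\pi(e)\in R_{>0}\}$. $\mathcal{G}$ is a P-graph if there is $\mu\colon\mathcal{E}^-\to\mathcal{P}(\mathcal{E}^+)$ with (i) $\mathcal{E}=\mathcal{E}^+\sqcup\mathcal{E}^-$; (ii) every cycle contains at most one edge of $\mathcal{E}^-$; (iii) for $e\in\mathcal{E}^-$: (a) $e'\in\mu(e)\Rightarrow s(e')=s(e)$; (b) $e'\in\mu(e)\Rightarrow$ every cycle containing $e'$ contains $t(e)$; (c) $\mu(e)\cap\mu(e')=\emptyset$ for $e\ne e'$; (iv) $\pi(e)+\sum_{e'\in\mu(e)}\pi(e')\in R_{\ge0}$ for all $e\in\mathcal{E}^-$. *)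

(* Defs.v *)
(* Nodes are the natural numbers 1..m+1 (paper's 1-based
   indexing, kept literally); matrices/vectors are functions on 1-based
   indices (only indices in range are ever constrained). *)
From HB Require Import structures.
From mathcomp Require Import all_boot all_algebra.
Set Implicit Arguments. Unset Strict Implicit. Unset Printing Implicit Defensive.
Import GRing.Theory.

Record POCR (R : comPzRingType) := {
  le : R -> R -> Prop;
  le_refl : forall x, le x x;
  le_anti : forall x y, le x y -> le y x -> x = y;
  le_trans : forall x y z, le x y -> le y z -> le x z;
  le_add : forall x y z, le x y -> le (x + z)%R (y + z)%R;
  le_mul : forall x y, le 0%R x -> le 0%R y -> le 0%R (x * y)%R }.

Section Blocks.
Variables (d : nat) (ms : nat -> nat).

Definition msum : nat := \sum_(0 <= j < d.+1) ms j.

Definition inN (i v : nat) : bool :=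
  if i == 0 then (msum - ms 0 < v <= msum.+1)
  else if i == d.+1 then v == msum.+1
  else (1 + \sum_(1 <= j < i) ms j <= v <= \sum_(1 <= j < i.+1) ms j).

Definition lin_system {R : comPzRingType} (A : nat -> nat -> R) (b : nat -> R)
  (jj : nat -> nat) : Prop :=
  [/\
      (forall i r c, 0 < i <= d -> inN i r -> 0 < c <= msum -> ~~ inN i c ->
         A r c = 0%R),
      (forall i r1 r2, 0 < i <= d -> inN i r1 -> inN i r2 ->
         b r1 != 0%R -> b r2 != 0%R -> r1 = r2),
      (forall i, 0 < i <= d -> inN i (jj i)) &
      (forall j, 0 < j <= msum - ms 0 -> (forall r, 0 < r <= d -> j != jj r) ->
         b j = 0%R)].

Definition Fset (jj : nat -> nat) : seq nat := msum.+1 :: [seq jj r | r <- iota 1 d].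

Definition Btil (k : nat) (w : nat -> nat) : seq nat :=
  [seq w j | j <- iota 1 d.+1 & j != k].

Definition inBk (k : nat) (w : nat -> nat) : Prop :=
  forall j, 0 < j <= d.+1 -> j != k -> inN j (w j).

End Blocks.

Section Graph.
Variables (E : finType) (s t : E -> nat).

(* undirected walk v0 -e1- v1 -e2- ... -ek- vk using edges of Z;
   vs = [v1;...;vk], p = [e1;...;ek] *)
Fixpoint uwalkv (Z : {set E}) (v0 : nat) (vs : seq nat) (p : seq E) : bool :=
  match vs, p with
  | [::], [::] => true
  | v1 :: vs', e :: p' =>
      [&& e \in Z,
          ((s e == v0) && (t e == v1)) || ((s e == v1) && (t e == v0)) &
          uwalkv Z v1 vs' p']
  | _, _ => false
  end.

Fixpoint dwalkv (Z : {set E}) (v0 : nat) (vs : seq nat) (p : seq E) : bool :=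
  match vs, p with
  | [::], [::] => true
  | v1 :: vs', e :: p' =>
      [&& e \in Z, s e == v0, t e == v1 & dwalkv Z v1 vs' p']
  | _, _ => false
  end.

Definition uconn (Z : {set E}) (u v : nat) : Prop :=
  exists vs p, uwalkv Z u vs p /\ last u vs = v.

Definition uacyclic (Z : {set E}) : Prop :=
  forall v0 vs p, p != [::] -> uniq p -> uwalkv Z v0 vs p ->
    last v0 vs = v0 -> uniq vs -> False.

Definition dpath (Z : {set E}) (u : nat) (vs : seq nat) (p : seq E) (w : nat)
  : Prop := [/\ dwalkv Z u vs p, last u vs = w & uniq (u :: vs)].

(* directed cycle of the whole graph (closed directed path, no repeated nodes);
   its nodes are map s p *)
Definition dcycle (p : seq E) : Prop :=
  exists v0 vs, [/\ p != [::], dwalkv [set: E] v0 vs p, last v0 vs = v0 & uniq vs].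

Variable m : nat.
Definition inNodes (v : nat) : bool := 0 < v <= m.+1.

Definition graph_ok : Prop :=
  forall e, [/\ inNodes (s e), inNodes (t e) & s e != t e].

Definition rootof (Z : {set E}) (v r : nat) : Prop :=
  [/\ inNodes r, uconn Z v r & forall e, e \in Z -> s e != r].

Definition ncomp (Z : {set E}) (n : nat) : Prop :=
  exists reps : seq nat,
    [/\ uniq reps, size reps = n, all inNodes reps,
        (forall a c, a \in reps -> c \in reps -> uconn Z a c -> a = c) &
        (forall v, inNodes v -> exists2 a, a \in reps & uconn Z v a)].

Definition Theta (B : seq nat) (Z : {set E}) : Prop :=
  [/\ uacyclic Z, ncomp Z (size (undup B)) &
      forall v, inNodes v -> exists r,
        [/\ rootof Z v r, r \in B & forall r', rootof Z v r' -> r' = r]].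

Definition ThetaF (F B : seq nat) (Z : {set E}) : Prop :=
  Theta B Z /\ forall v, inNodes v -> exists2 f, f \in F & uconn Z v f.

End Graph.

Section Labels.
Variables (R : comPzRingType) (E : finType) (s t : E -> nat) (pi : E -> R).

Definition Loff (i j : nat) : R := (\sum_(e | (s e == j) && (t e == i)) pi e)%R.

Definition Lap (m i j : nat) : R :=
  if i == j then (- \sum_(k <- iota 1 m.+1 | k != i) Loff k i)%R else Loff i j.

Variables (d : nat) (ms : nat -> nat) (A : nat -> nat -> R) (b : nat -> R)
  (jj : nat -> nat).

Definition Acompatible : Prop :=
  (forall e i j, i <= d -> 0 < j <= d -> i != j ->
     inN d ms i (s e) -> ~~ inN d ms j (t e)) /\
  (forall l, 0 < l <= msum d ms -> (forall r, 0 < r <= d -> l != jj r) ->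
     (forall c, 0 < c <= msum d ms -> Lap (msum d ms) l c = A l c) /\
     Lap (msum d ms) l (msum d ms).+1 = b l).

Variable ord : POCR R.
Definition negE (e : E) : Prop := le ord (pi e) 0%R /\ pi e != 0%R.
Definition posE (e : E) : Prop := le ord 0%R (pi e) /\ pi e != 0%R.

Definition Pgraph : Prop :=
  exists mu : E -> {set E},
  [/\ (forall e, negE e \/ posE e),
      (forall p, dcycle s t p -> forall e1 e2, e1 \in p -> e2 \in p ->
          negE e1 -> negE e2 -> e1 = e2) &
      forall e, negE e ->
      [/\ forall e', e' \in mu e -> posE e',
          forall e', e' \in mu e -> s e' = s e,
          forall e', e' \in mu e -> forall p, dcycle s t p -> e' \in p ->
             t e \in map s p,
          forall e2, negE e2 -> e2 != e -> mu e :&: mu e2 = set0 &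
          le ord 0%R (pi e + \sum_(e' in mu e) pi e')%R]].

Definition condStar : Prop :=
  forall l' i, 0 < l' <= msum d ms -> 0 < i <= d ->
  forall vs p, dpath s t [set: E] (jj i) vs p l' ->
  (exists2 e, e \in p & negE e) -> (msum d ms).+1 \in jj i :: vs.

End Labels.

(* Main.v *)
Require Import Defs.
From HB Require Import structures.
From mathcomp Require Import all_boot all_algebra zify.
Set Implicit Arguments. Unset Strict Implicit. Unset Printing Implicit Defensive.

Section G.
Variables (E : finType) (s t : E -> nat).

Lemma dwalk_size Z v vs p : dwalkv s t Z v vs p -> size vs = size p.
Proof. by elim: vs v p => [|a vs IH] v [|e p] //= /and4P[_ _ _ /IH ->]. Qed.

Lemma dwalk_map Z v vs p : dwalkv s t Z v vs p -> map t p = vs.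
Proof. by elim: vs v p => [|a vs IH] v [|e p] //= /and4P[_ _ /eqP-> /IH ->]. Qed.

Lemma dwalk_uwalk Z v vs p : dwalkv s t Z v vs p -> uwalkv s t Z v vs p.
Proof.
elim: vs v p => [|a vs IH] v [|e p] //= /and4P[-> /eqP-> /eqP-> /IH->].
by rewrite !eqxx.
Qed.

Lemma dwalk_sub (Z Z' : {set E}) v vs p : Z \subset Z' -> dwalkv s t Z v vs p -> dwalkv s t Z' v vs p.
Proof.
move=> /subsetP sZ; elim: vs v p => [|a vs IH] v [|e p] //= /and4P[/sZ-> -> -> /IH->].
done.
Qed.

Lemma uconn_refl Z v : uconn s t Z v v. Proof. by exists [::], [::]. Qed.

Lemma uwalk_cat Z v vs1 p1 vs2 p2 : uwalkv s t Z v vs1 p1 ->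
  uwalkv s t Z (last v vs1) vs2 p2 -> uwalkv s t Z v (vs1 ++ vs2) (p1 ++ p2).
Proof.
elim: vs1 v p1 => [|a vs IH] v [|e p] //=; try by move=> _.
case/and3P=> H1 H2 /IH H /H H3; by rewrite H1 H2 H3.
Qed.

Lemma uconn_trans Z u v x : uconn s t Z u v -> uconn s t Z v x -> uconn s t Z u x.
Proof.
case=> vs1 [p1 [W1 L1]] [vs2 [p2 [W2 L2]]].
exists (vs1 ++ vs2), (p1 ++ p2); split; first by apply: uwalk_cat; rewrite ?L1.
by rewrite last_cat L1.
Qed.

Lemma uconn_sym Z u v : uconn s t Z u v -> uconn s t Z v u.
Proof.
case=> vs [p [H <-]]; elim: vs u p H => [|a vs IH] u [|e p] //=.
- by move=> _; exact: uconn_refl.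
- case/and3P=> eZ He /IH H; apply: uconn_trans H _.
  exists [:: u], [:: e]; split=> //=; rewrite eZ /= andbT; by rewrite orbC.
Qed.

Lemma dwalk_uconn Z v vs p y : dwalkv s t Z v vs p -> y \in v :: vs -> uconn s t Z v y.
Proof.
elim: vs v p => [|a vs IH] v [|e p] //=.
- by move=> _; rewrite inE => /eqP->; exact: uconn_refl.
- case/and4P=> eZ /eqP sv /eqP ta W; rewrite inE => /orP[/eqP->|yin].
    exact: uconn_refl.
  apply: uconn_trans (IH _ _ W yin).
  exists [:: a], [:: e]; split=> //=; by rewrite eZ sv ta !eqxx.
Qed.

Lemma count_reps Z (reps S : seq nat) : uniq reps ->
  (forall a c, a \in reps -> c \in reps -> uconn s t Z a c -> a = c) ->
  (forall a, a \in reps -> exists2 f, f \in S & uconn s t Z a f) ->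
  size reps <= size S.
Proof.
elim: reps S => [|a reps IH] S //= /andP[anr ur] Hd Hc.
have [f fS af] := Hc a (mem_head _ _).
have Hlt : size (filter (predC1 f) S) < size S.
  have h1 := count_predC (predC1 f) S.
  have h2 : 0 < count (predC (predC1 f)) S.
    by rewrite -has_count; apply/hasP; exists f => //=; rewrite negbK.
  rewrite size_filter; move: h1 h2; set x1 := count (predC1 f) S; set x2 := count _ S; move=> h1 h2; by rewrite -h1 -{1}[x1]addn0 ltn_add2l.
apply: leq_ltn_trans (IH _ ur _ _) Hlt.
- move=> x y xr yr; apply: Hd; by rewrite inE ?xr ?yr orbT.
- move=> c cr; have cr' : c \in a :: reps by rewrite inE cr orbT.
  have [g gS cg] := Hc c cr'.
  exists g => //; rewrite mem_filter gS andbT /=; apply/eqP => gf; subst g.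
  have ac := Hd a c (mem_head _ _) cr' (uconn_trans af (uconn_sym cg)).
  by subst; rewrite cr in anr.
Qed.

Lemma theta_sink m B Z x : Theta s t m B Z -> x \in B -> forall e, e \in Z -> s e != x.
Proof.
case=> _ [reps [ur sz allr Hd Hc]] Hr xB e eZ; apply/negP => /eqP sex.
have : size reps <= size (filter (predC1 x) (undup B)).
  apply: count_reps ur Hd _ => a ar.
  have [r [[rN ar' rs] rB _]] := Hr a (allP allr a ar).
  exists r => //; rewrite mem_filter mem_undup rB andbT /=; apply/eqP => rb.
  by move: (rs e eZ); rewrite sex rb eqxx.
rewrite sz size_filter; have h1 := count_predC (predC1 x) (undup B).
have h2 : 0 < count (predC (predC1 x)) (undup B).
  by rewrite -has_count; apply/hasP; exists x; rewrite ?mem_undup //= negbK.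
move: h1 h2; set x1 := count (predC1 x) _; set x2 := count _ _.
move=> h1 h2; rewrite -h1 -{2}[x1]addn0 leq_add2l leqn0.
by move: h2; rewrite lt0n => /negbTE ->.
Qed.

Lemma dwalk_rcons Z v vs p a e : size vs = size p ->
  dwalkv s t Z v (rcons vs a) (rcons p e) =
  dwalkv s t Z v vs p && [&& e \in Z, s e == last v vs & t e == a].
Proof.
elim: vs v p => [|b vs IH] v [|f p] //= Hs; first by rewrite andbT.
by rewrite IH; [rewrite -!andbA | case: Hs].
Qed.

Lemma dwalk_suffix Z v vs p y : dwalkv s t Z v vs p -> uniq (v :: vs) -> y \in v :: vs ->
  exists vs2 p2, [/\ dwalkv s t Z y vs2 p2, last y vs2 = last v vs & uniq (y :: vs2)].
Proof.
elim: vs v p => [|a vs IH] v [|e p] //=.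
- by move=> _ _; rewrite inE => /eqP->; exists [::], [::].
- move=> W /andP[vn u]; rewrite inE => /orP[/eqP->|yin].
    by exists (a :: vs), (e :: p); split => //=; rewrite vn.
  case/and4P: W => _ _ _ W; exact: IH W u yin.
Qed.

Variable m : nat.
Hypothesis Hg : graph_ok s t m.

Lemma dwalk_nodes Z v vs p : dwalkv s t Z v vs p -> all (inNodes m) vs.
Proof.
elim: vs v p => [|a vs IH] v [|e p] //= /and4P[_ _ /eqP<- /IH->].
by case: (Hg e) => _ -> _.
Qed.

Lemma sink_walk Z v : uacyclic s t Z ->
  exists vs p, dwalkv s t Z v vs p /\ (forall e, e \in Z -> s e != last v vs).
Proof.
move=> Hac.
suff H : forall n, (exists vs p, dwalkv s t Z v vs p /\ (forall e, e \in Z -> s e != last v vs)) \/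
  (exists vs p, [/\ dwalkv s t Z v vs p, uniq (v :: vs) & size vs = n]).
  case: (H m.+2) => // [[vs [p [W u sz]]]].
  have : size vs <= m.+1.
    have -> : m.+1 = size (iota 1 m.+1) by rewrite size_iota.
    apply: uniq_leq_size; first by case/andP: u.
    move=> x xv; have := allP (dwalk_nodes W) x xv; rewrite mem_iota /inNodes; lia.
  by rewrite sz ltnn.
elim=> [|n IH]; first by right; exists [::], [::].
case: IH => [H|[vs [p [W u sz]]]]; first by left.
case: (pickP (fun e => (e \in Z) && (s e == last v vs))) => [e /andP[eZ se]|none].
- have [yin|ynot] := boolP (t e \in v :: vs).
  + exfalso. have [vs2 [p2 [W2 l2 u2]]] := dwalk_suffix W u yin.
    apply: (Hac (t e) (rcons vs2 (t e)) (rcons p2 e)).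
    * by rewrite -size_eq0 size_rcons.
    * apply: (@map_uniq _ _ t); by rewrite map_rcons (dwalk_map W2) rcons_uniq.
    * apply: dwalk_uwalk; by rewrite dwalk_rcons ?(dwalk_size W2) // W2 eZ /= l2 se eqxx.
    * by rewrite last_rcons.
    * by rewrite rcons_uniq.
  + right; exists (rcons vs (t e)), (rcons p e); split.
    * by rewrite dwalk_rcons ?(dwalk_size W) // W eZ se eqxx.
    * by rewrite -rcons_cons rcons_uniq ynot.
    * by rewrite size_rcons sz.
- left; exists vs, p; split => // e eZ; apply/negP => /eqP se.
  by have := none e; rewrite eZ se eqxx.
Qed.

End G.
Section Blocks2.
Variables (d : nat) (ms : nat -> nat).
Local Notation S i := (\sum_(1 <= j < i) ms j)%N.
Local Notation T := (\sum_(1 <= j < d.+1) ms j)%N.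

Lemma msumE : msum d ms = (ms 0 + T)%N.
Proof. by rewrite /msum big_ltn. Qed.

Lemma TM : T <= msum d ms.
Proof. by rewrite msumE leq_addl. Qed.

Lemma S_mono a c : a <= c -> S a <= S c.
Proof.
move=> ac; case: (leqP a 1) => a1; first by rewrite big_geq.
rewrite (@big_cat_nat _ _ _ a 1 c) //=; [exact: leq_addr | exact: ltnW].
Qed.

Lemma inN_mid i v : 0 < i <= d -> inN d ms i v = (1 + S i <= v <= S i.+1).
Proof. by case/andP=> i0 id; rewrite /inN gtn_eqF // ltn_eqF. Qed.

Lemma inN_top v : inN d ms d.+1 v = (v == (msum d ms).+1).
Proof. by rewrite /inN /= eqxx. Qed.

Lemma inN_zero v : inN d ms 0 v = (T < v <= (msum d ms).+1).
Proof. by rewrite /inN /= {1}msumE addKn. Qed.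

Lemma inN_mid_bound i v : 0 < i <= d -> inN d ms i v -> 0 < v <= T.
Proof.
move=> hi; rewrite inN_mid // => /andP[h1 h2]; apply/andP; split.
  exact: leq_trans (leq_addr _ _) h1.
apply: leq_trans h2 (S_mono _); by case/andP: hi.
Qed.

Lemma inN_disj i j v : 0 < i -> i < j -> j <= d.+1 -> inN d ms i v -> inN d ms j v -> False.
Proof.
move=> i0 ij jd hi hj.
have id : 0 < i <= d by rewrite i0 /=; exact: leq_trans ij jd.
have vb := inN_mid_bound id hi.
case: (ltngtP j d.+1) jd => // [jlt _|jeq _].
  move: hi hj; rewrite !inN_mid // ?(leq_ltn_trans (leq0n _) ij) //.
  move=> /andP[_ h1] /andP[h2 _].
  have := S_mono ij; move: h1 h2; set a := S i.+1; set c := S j; lia.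
move: hj; rewrite jeq inN_top => /eqP hv; move: vb; rewrite hv; have := TM; lia.
Qed.

Lemma inN_cover v : 0 < v <= T -> exists2 i, 0 < i <= d & inN d ms i v.
Proof.
suff H : forall n, n <= d -> 0 < v <= S n.+1 -> exists2 i, 0 < i <= n & (1 + S i <= v <= S i.+1).
  move=> hv; have [i hi hv'] := H d (leqnn d) hv.
  have hid : 0 < i <= d by move: hi; lia.
  by exists i => //; rewrite inN_mid.
elim=> [|n IH] hn hv.
  by move: hv; rewrite big_geq //; case/andP=> h1 h2; move: (leq_trans h1 h2).
case: (leqP v (S n.+1)) => hvn.
  have hv2 : 0 < v <= S n.+1 by case/andP: hv => -> _; rewrite hvn.
  have [i hi hv'] := IH (ltnW hn) hv2.
  by exists i => //; move: hi; lia.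
exists n.+1; first by rewrite leqnn. by case/andP: hv => _ h; rewrite h andbT add1n.
Qed.

End Blocks2.
Lemma count_predC1_lt (S : seq nat) x : x \in S -> count (predC1 x) S < size S.
Proof.
move=> xS; have h1 := count_predC (predC1 x) S.
have h2 : 0 < count (predC (predC1 x)) S.
  by rewrite -has_count; apply/hasP; exists x => //=; rewrite negbK.
move: h1 h2; set x1 := count (predC1 x) _; set x2 := count _ _.
move=> h1 h2; by rewrite -h1 -{1}[x1]addn0 ltn_add2l.
Qed.

Lemma root_uniq (E : finType) (s t : E -> nat) m B Z v a c :
  Theta s t m B Z -> inNodes m v -> rootof s t m Z v a -> rootof s t m Z v c -> a = c.
Proof. by case=> _ _ Hr hv ha hc; have [r [_ _ uq]] := Hr v hv; rewrite (uq _ ha) (uq _ hc). Qed.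

Lemma rootof_mem (E : finType) (s t : E -> nat) m B Z v a :
  Theta s t m B Z -> inNodes m v -> rootof s t m Z v a -> a \in B.
Proof. by case=> _ _ Hr hv ha; have [r [_ rB uq]] := Hr v hv; rewrite (uq _ ha). Qed.

Theorem lemma5p2 (R : comPzRingType) (ord : POCR R) (d : nat) (ms : nat -> nat)
  (A : nat -> nat -> R) (b : nat -> R) (jj : nat -> nat)
  (E : finType) (s t : E -> nat) (pi : E -> R)
  (Hsys : lin_system d ms A b jj)
  (Hg : graph_ok s t (msum d ms))
  (Hcomp : Acompatible s t pi d ms A b jj)
  (HP : Pgraph s t pi ord)
  (Hstar : condStar s t pi d ms jj ord)
  (k : nat) (w : nat -> nat) (l : nat) (zeta : {set E}) :
  0 < k <= d.+1 -> inBk d ms k w ->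
  0 < l <= (msum d ms).+1 -> l \notin Btil d k w ->
  ThetaF s t (msum d ms) (Fset d ms jj) (l :: Btil d k w) zeta ->
  (* (i) *)
  (forall r i, 0 < r <= d -> i \in l :: Btil d k w ->
     forall vs p, dpath s t zeta (jj r) vs p i ->
     forall e, e \in p -> ~ negE pi ord e) /\
  (* (ii) *)
  (forall zeta' : {set E},
     Theta s t (msum d ms) (l :: Btil d k w) zeta' ->
     (forall r x, 0 < r <= d -> rootof s t (msum d ms) zeta (jj r) x ->
        rootof s t (msum d ms) zeta' (jj r) x) ->
     (forall x, rootof s t (msum d ms) zeta (msum d ms).+1 x ->
        rootof s t (msum d ms) zeta' (msum d ms).+1 x) /\
     ThetaF s t (msum d ms) (Fset d ms jj) (l :: Btil d k w) zeta').
Proof.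
move=> /andP[k0 kd] HBk /andP[l0 lM] lnB [HT HF].
case: Hsys => _ _ Hjj _.
case: Hcomp => Hc1 _.
have TM := TM d ms.
set M := msum d ms in TM Hg HF HT Hstar lM Hc1 *.
set T := (\sum_(1 <= j < d.+1) ms j)%N in TM.
set B := l :: Btil d k w in HF HT *.
have jjM : forall r, 0 < r <= d -> 0 < jj r <= M.
  move=> r hr; have := inN_mid_bound hr (Hjj r hr); rewrite -/T; lia.
have HB' : forall j, 1 <= j < 1 + d.+1 -> j != k -> inN d ms j (w j).
  move=> j hj jk; apply: HBk jk; move: hj; lia.
have Bprop : forall x, x \in B -> [\/ x = l, x = M.+1 | 0 < x <= T].
  move=> x; rewrite inE => /orP[/eqP->|]; first by constructor 1.
  case/mapP => j; rewrite mem_filter mem_iota => /andP[jk /andP[j1 jd]] ->.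
  have hj := HB' j (introT andP (conj j1 jd)) jk.
  have jd' : j <= d.+1 by move: jd; lia.
  case: (ltngtP j d.+1) jd' => // [jlt _|jeq _].
    constructor 3; apply: inN_mid_bound hj; by rewrite j1.
  by constructor 2; move: hj; rewrite jeq inN_top => /eqP.
have BN : forall x, x \in B -> 0 < x <= M.+1.
  move=> x /Bprop [->|->|]; [by rewrite l0 | by rewrite leqnn | lia].
have szB : size (undup B) = d.+1.
  have uB : uniq B.
    rewrite /B /= lnB /Btil map_inj_in_uniq ?filter_uniq ?iota_uniq //.
    move=> j1 j2; rewrite !mem_filter !mem_iota => /andP[jk1 /andP[a1 b1]] /andP[jk2 /andP[a2 b2]] e.
    have h1 := HB' j1 (introT andP (conj a1 b1)) jk1.
    have h2 := HB' j2 (introT andP (conj a2 b2)) jk2.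
    case: (ltngtP j1 j2) => // hlt; exfalso.
      apply: (inN_disj a1 hlt _ h1); first by move: b2; lia. by rewrite e.
    apply: (inN_disj a2 hlt _ h2); first by move: b1; lia. by rewrite -e.
  rewrite undup_id // /B /= /Btil size_map size_filter.
  have := count_predC (pred1 k) (iota 1 d.+1).
  rewrite count_uniq_mem ?iota_uniq // mem_iota size_iota.
  have -> : (1 <= k < 1 + d.+1) = true by apply/andP; split => //; lia.
  set c := count (predC (pred1 k)) _ => h; exact: h.
have MN : inNodes M M.+1 by rewrite /inNodes leqnn.
have noconn : forall r, 0 < r <= d -> ~ uconn s t zeta (jj r) M.+1.
  move=> r hr H.
  case: HT => _ [reps [ur sz allr Hd Hcv]] _.
  have : size reps <= size (filter (predC1 (jj r)) (Fset d ms jj)).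
    apply: count_reps ur Hd _ => a ar.
    have [f fF af] := HF a (allP allr a ar).
    case: (eqVneq f (jj r)) => [fj|fn].
      exists M.+1.
        rewrite mem_filter mem_head andbT /=; apply/eqP => h.
        by have := jjM r hr; rewrite -h ltnn andbF.
      by apply: uconn_trans af _; rewrite fj.
    by exists f => //; rewrite mem_filter fF andbT.
  rewrite sz szB size_filter.
  have hF : jj r \in Fset d ms jj.
    rewrite /Fset inE; apply/orP; right; apply/mapP; exists r => //.
    rewrite mem_iota; move: hr; lia.
  have := count_predC1_lt hF; rewrite /Fset /= size_map size_iota.
  set c := count _ _; lia.
split.
  move=> r i hr iB vs p [W L U] e ep ne.
  case: (eqVneq i M.+1) => [iM|iM].
    apply: (noconn r hr); rewrite -iM -L; apply: dwalk_uconn W _; by rewrite mem_last.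
  have hi : 0 < i <= M by move: (BN i iB) iM; lia.
  have hd : dpath s t [set: E] (jj r) vs p i by split => //; exact: dwalk_sub (subsetT zeta) W.
  have := Hstar i r hi hr vs p hd (ex_intro2 _ _ e ep ne).
  rewrite inE => /orP[/eqP h|h].
    by have := jjM r hr; rewrite -h ltnn andbF.
  apply: (noconn r hr); apply: dwalk_uconn W _; by rewrite inE h orbT.
move=> zeta' HT' Hroots.
have N0e : forall e, inN d ms 0 (s e) -> inN d ms 0 (t e).
  move=> e h; apply/negPn/negP => hn.
  case: (Hg e) => _ te _.
  have hv : 0 < t e <= T by move: hn te; rewrite inN_zero /inNodes -/M -/T; lia.
  have [j hj hin] := inN_cover hv.
  have : 0 != j by move: hj; lia.
  move=> /(Hc1 e 0 j (leq0n d) hj) /(_ h); by rewrite hin.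
have N0w : forall (Z : {set E}) v vs p, dwalkv s t Z v vs p -> inN d ms 0 v -> inN d ms 0 (last v vs).
  move=> Z v vs; elim: vs v => [|a vs IH] v [|e p] //= /and4P[_ /eqP sv /eqP ta W] h.
  apply: IH W _; rewrite -ta; apply: N0e; by rewrite sv.
have MN0 : inN d ms 0 M.+1 by rewrite inN_zero -/M -/T; lia.
have rootN0 : forall Z, Theta s t M B Z -> forall x, rootof s t M Z M.+1 x -> x \in B /\ inN d ms 0 x.
  move=> Z HZ x hx; split; first exact: rootof_mem HZ MN hx.
  case: (HZ) => Hac _ _.
  have [vs [p [W snk]]] := sink_walk Hg M.+1 Hac.
  have hy : rootof s t M Z M.+1 (last M.+1 vs).
    split => //.
      have := mem_last M.+1 vs; rewrite inE => /orP[/eqP->//|hin].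
      exact: (allP (dwalk_nodes Hg W)).
    by exists vs, p; split => //; exact: dwalk_uwalk.
  rewrite (root_uniq HZ MN hx hy); exact: N0w W MN0.
have BN0 : forall x, x \in B -> inN d ms 0 x -> x = l \/ x = M.+1.
  move=> x /Bprop [->|->|hx]; [by left|by right|].
  rewrite inN_zero -/M -/T; move: hx; lia.
have root_self : forall Z, Theta s t M B Z -> M.+1 \in B -> rootof s t M Z M.+1 M.+1.
  move=> Z HZ MB; split => //; first exact: uconn_refl.
  exact: theta_sink HZ MB.
have part1 : forall x, rootof s t M zeta M.+1 x -> rootof s t M zeta' M.+1 x.
  move=> x hx.
  have [r' [hr' r'B uq']] := (let: And3 _ _ H := HT' in H) M.+1 MN.
  have [xB xN] := rootN0 zeta HT x hx.
  have [_ r'N] := rootN0 zeta' HT' r' hr'.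
  case: (boolP (M.+1 \in B)) => MB.
    by rewrite (root_uniq HT MN hx (root_self zeta HT MB)); exact: root_self.
  have xl : x = l.
    case: (BN0 x xB xN) => // h; by rewrite -h xB in MB.
  have rl : r' = l.
    case: (BN0 r' r'B r'N) => // h; by rewrite -h r'B in MB.
  by rewrite xl -rl.
split => //; split => // v hv.
have [rho [[rhoN vrho rhos] rhoB _]] := (let: And3 _ _ H := HT' in H) v hv.
have [f fF rhof] := HF rho rhoN.
have hroot : rootof s t M zeta f rho.
  by split => //; [exact: uconn_sym | exact: theta_sink HT rhoB].
exists f => //; apply: uconn_trans vrho _.
move: fF; rewrite /Fset inE => /orP[/eqP fM| /mapP[r rI fr]].
  subst f; have [_ h _] := part1 rho hroot; exact: uconn_sym h.
have hr : 0 < r <= d by move: rI; rewrite mem_iota; lia.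
subst f; have [_ h _] := Hroots r rho hr hroot; exact: uconn_sym h.
Qed.
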